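(* Let $n\in\mathbb{N}$ and let $\varphi$ be a formula of $\mathbf{CPN}_n$ (built only from propositional letters, the constants $\perp_c$, $\perp_{(n)}$, $\top_{(n)}$, the negations $\neg_c$ and $\to_{(n)}$). Regard $\varphi$ as a formula of $\mathbf{CPN}_{n+1}$ by reading every chain over $[n]$ as a chain over $[n+1]$ (so $\perp_{(n)}$ becomes $\perp_{\{1,\dots,n\}}$ and $\neg_{(n)}$ becomes the weak negation $\neg_{\{1,\dots,n\}}$ of $\mathbf{CPN}_{n+1}$), replacing $\to_{(n)}$ by $\to_{(n+1)}$ and $\top_{(n)}$ by $\top_{(n+1)}$. If $\vdash_{(n+1)}\varphi$, then $\vdash_{(n)}\varphi$.
   Context: For each $m\ge 1$, write $[m]=\{1,\dots,m\}$. Chains: a chain over $[m]$ is a finite sequence of distinct elements of $[m]$; chains with the same length and the same symbols are identified, so a chain is effectively a subset of $[m]$; $\epsilon$ is the empty chain and $(m)$ the chain of all symbols of $[m]$. For chains $c,d$: the coconcatenation $c\otimes d$ is the chain of symbols occurring in exactly one of $c,d$; $d$ is a subchain of $c$ if every symbol of $d$ is a symbol of $c$. Language of $\mathbf{CPN}_m$: a countable set of propositional letters (the same for all $m$); constants $\perp_c$ for each chain $c$ over $[m]$ with $1\le|c|\le m-1$, and constants $\perp_{(m)}$ and $\top_{(m)}$; a unary connective $\neg_c$ for each nonempty chain $c$ over $[m]$; a binary connective $\to_{(m)}$. Formulas are built as usual. Conventions: $\neg_\epsilon\varphi:=\varphi$, $\perp_\epsilon:=\top_{(m)}$, and $\perp_c$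 for $c=(m)$ means $\perp_{(m)}$. Abbreviations: $\varphi\wedge_{(m)}\psi:=\neg_{(m)}(\varphi\to_{(m)}\neg_{(m)}\psi)$, $\varphi\leftrightarrow_{(m)}\psi:=(\varphi\to_{(m)}\psi)\wedge_{(m)}(\psi\to_{(m)}\varphi)$. Axioms of $\mathbf{CPN}_m$, for all formulas $\varphi,\psi,\chi$ and all nonempty chains $c_k,c_r$ over $[m]$: (A1) $\varphi\to_{(m)}(\psi\to_{(m)}\varphi)$; (A2) $(\varphi\to_{(m)}(\psi\to_{(m)}\chi))\to_{(m)}((\varphi\to_{(m)}\psi)\to_{(m)}(\varphi\to_{(m)}\chi))$; (A3) $(\neg_{(m)}\psi\to_{(m)}\neg_{(m)}\varphi)\to_{(m)}((\neg_{(m)}\psi\to_{(m)}\varphi)\to_{(m)}\psi)$; (A4) $\varphi\to_{(m)}(\perp_{c_k}\to_{(m)}\neg_{c_k}\varphi)$; (A5) $\neg_{c_k}\neg_{c_r}\varphi\leftrightarrow_{(m)}\neg_{c_k\otimes c_r}\varphi$; (A6) $\neg_{c_k}\perp_{c_r}\leftrightarrow_{(m)}\perp_{c_k\otimes c_r}$; (A7) $\perp_{c_k}\to_{(m)}\perp_{c_r}$, whenever $c_r$ is a subchain of $c_k$. The only rule is modus ponens for $\to_{(m)}$; $\vdash_{(m)}\varphi$ means $\varphi$ has a derivation from these axioms by modus ponens. *)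

(* Defs.v *)
From mathcomp Require Import all_boot.
Set Implicit Arguments. Unset Strict Implicit. Unset Printing Implicit Defensive.

(* Chains over [m] are identified with subsets of [m]; we represent [m] = {1..m}
   by 'I_m = {0..m-1} (symbol i+1 is the ordinal i). *)
Definition chain (m : nat) := {set 'I_m}.

Definition cocat m (c d : chain m) : chain m := (c :\: d) :|: (d :\: c).

(* Formulas of CPN_m.  Bot c is the constant bottom_c; Bot set0 is top_(m)
   (convention bottom_eps := top_(m)) and Bot setT is bottom_(m).
   Neg c is only available for nonempty chains c. *)
Inductive form (m : nat) : Type :=
| Var of nat
| Bot of chain m
| Neg (c : chain m) of c != set0 & form m
| Imp of form m & form m.

Arguments Var {m}.

Definition negc m (c : chain m) (phi : form m) : form m :=
  match (c != set0) as b return (c != set0) = b -> form m with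
  | true => fun h => Neg h phi
  | false => fun _ => phi
  end erefl.

Lemma setT_neq0 k : [set: 'I_k.+1] != set0.
Proof. by apply/set0Pn; exists ord0; rewrite inE. Qed.

Definition negF k (phi : form k.+1) : form k.+1 := Neg (setT_neq0 k) phi.
Definition andF k (phi psi : form k.+1) : form k.+1 :=
  negF (Imp phi (negF psi)).
Definition iffF k (phi psi : form k.+1) : form k.+1 :=
  andF (Imp phi psi) (Imp psi phi).

Inductive prov (k : nat) : form k.+1 -> Prop :=
| A1 phi psi : prov (Imp phi (Imp psi phi))
| A2 phi psi chi :
    prov (Imp (Imp phi (Imp psi chi)) (Imp (Imp phi psi) (Imp phi chi)))
| A3 phi psi :
    prov (Imp (Imp (negF psi) (negF phi)) (Imp (Imp (negF psi) phi) psi))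
| A4 phi (ck : chain k.+1) (hk : ck != set0) :
    prov (Imp phi (Imp (Bot ck) (Neg hk phi)))
| A5 phi (ck cr : chain k.+1) (hk : ck != set0) (hr : cr != set0) :
    prov (iffF (Neg hk (Neg hr phi)) (negc (cocat ck cr) phi))
| A6 (ck cr : chain k.+1) (hk : ck != set0) (hr : cr != set0) :
    prov (iffF (Neg hk (Bot cr)) (Bot (cocat ck cr)))
| A7 (ck cr : chain k.+1) (hk : ck != set0) (hr : cr != set0) :
    cr \subset ck -> prov (Imp (Bot ck) (Bot cr))
| MP phi psi : prov (Imp phi psi) -> prov phi -> prov psi.

Definition liftc n (c : chain n) : chain n.+1 := [set widen_ord (leqnSn n) i | i in c].

Lemma liftc_neq0 n (c : chain n) : c != set0 -> liftc c != set0.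
Proof. by rewrite /liftc imset_eq0. Qed.

(* Reading a CPN_n formula as a CPN_(n+1) formula: chains are lifted
   (so bottom_(n) becomes bottom_{1..n}, neg_(n) becomes neg_{1..n},
   top_(n) = Bot set0 becomes Bot set0 = top_(n+1)), and ->_(n) becomes ->_(n+1). *)
Fixpoint embed n (phi : form n) : form n.+1 :=
  match phi with
  | Var p => Var p
  | Bot c => Bot (liftc c)
  | Neg c h psi => Neg (liftc_neq0 h) (embed psi)
  | Imp a b => Imp (embed a) (embed b)
  end.
Arguments prov k _ : clear implicits.

(* Main.v *)
Require Import Defs.
From mathcomp Require Import all_boot.
Set Implicit Arguments. Unset Strict Implicit. Unset Printing Implicit Defensive.

Inductive der k (G : form k.+1 -> Prop) : form k.+1 -> Prop :=
| dH p : G p -> der G p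
| dA p : prov k p -> der G p
| dM p q : der G (Imp p q) -> der G p -> der G q.

Definition ext k (a : form k.+1) (G : form k.+1 -> Prop) := fun x => x = a \/ G x.

Lemma prov_id k (a : form k.+1) : prov k (Imp a a).
Proof.
have h1 := A2 a (Imp a a) a. have h2 := A1 a (Imp a a). have h3 := A1 a a.
exact: MP (MP h1 h2) h3.
Qed.

Lemma DT k (G : form k.+1 -> Prop) a b : der (ext a G) b -> der G (Imp a b).
Proof.
elim=> [p [->|Gp]|p Pp|p q _ IH1 _ IH2].
- by apply: dA; apply: prov_id.
- exact: dM (dA _ (A1 _ _)) (dH Gp).
- exact: dM (dA _ (A1 _ _)) (dA _ Pp).
- exact: dM (dM (dA _ (A2 _ _ _)) IH1) IH2.
Qed.

Lemma der0 k (p : form k.+1) : der (fun _ => False) p -> prov k p.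
Proof. elim=> [p' []|//|p' q _ H1 _ H2]; exact: MP H1 H2. Qed.

Lemma wk k (G : form k.+1 -> Prop) a p : der G p -> der (ext a G) p.
Proof.
elim=> [q Gq|q Pq|q r _ H1 _ H2]; [exact: dH (or_intror Gq)|exact: dA|exact: dM H1 H2].
Qed.

Lemma hyp k (G : form k.+1 -> Prop) a : der (ext a G) a.
Proof. exact: dH (or_introl erefl). Qed.

Lemma dne k (G : form k.+1 -> Prop) b : der G (negF (negF b)) -> der G b.
Proof.
move=> H; have h := A3 (negF b) b.
exact: dM (dM (dA _ h) (dM (dA _ (A1 _ _)) H)) (dA _ (prov_id _)).
Qed.

Lemma dni k (G : form k.+1 -> Prop) b : der G b -> der G (negF (negF b)).
Proof.
move=> H; have h := A3 b (negF (negF b)).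
apply: dM (dM (dA _ h) _) _.
- by apply: DT; apply: dne; apply: hyp.
- exact: dM (dA _ (A1 _ _)) H.
Qed.

Lemma efq k (G : form k.+1 -> Prop) a b : der G (negF a) -> der G a -> der G b.
Proof.
move=> Hn H; have h := A3 a b.
exact: dM (dM (dA _ h) (dM (dA _ (A1 _ _)) Hn)) (dM (dA _ (A1 _ _)) H).
Qed.

Lemma andI k (G : form k.+1 -> Prop) a b : der G a -> der G b -> der G (andF a b).
Proof.
move=> Ha Hb; have h := A3 b (negF (Imp a (negF b))).
apply: dM (dM (dA _ h) _) _.
- apply: DT; apply: dM (dne (hyp _ _)) (wk _ Ha).
- exact: dM (dA _ (A1 _ _)) Hb.
Qed.

Lemma andE1 k (G : form k.+1 -> Prop) a b : der G (andF a b) -> der G a.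
Proof.
move=> H; have h := A3 (Imp a (negF b)) a.
apply: dM (dM (dA _ h) (dM (dA _ (A1 _ _)) H)) _.
apply: DT; apply: DT; apply: efq (wk _ (hyp _ _)) (hyp _ _).
Qed.

Lemma andE2 k (G : form k.+1 -> Prop) a b : der G (andF a b) -> der G b.
Proof.
move=> H; have h := A3 (Imp a (negF b)) b.
exact: dM (dM (dA _ h) (dM (dA _ (A1 _ _)) H)) (dA _ (A1 _ _)).
Qed.

Lemma selfneg k (G : form k.+1 -> Prop) a : der G (Imp a (negF a)) -> der G (negF a).
Proof.
move=> H; have h := A3 a (negF a).
apply: dM (dM (dA _ h) _) _.
- by apply: DT; apply: dM (wk _ H) (dne (hyp _ _)).
- by apply: DT; apply: dne; apply: hyp.
Qed.

Lemma iffI k (G : form k.+1 -> Prop) a b :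
  der G (Imp a b) -> der G (Imp b a) -> der G (iffF a b).
Proof. exact: andI. Qed.
Lemma iffE1 k (G : form k.+1 -> Prop) a b : der G (iffF a b) -> der G (Imp a b).
Proof. exact: andE1. Qed.
Lemma iffE2 k (G : form k.+1 -> Prop) a b : der G (iffF a b) -> der G (Imp b a).
Proof. exact: andE2. Qed.
Lemma iffR k (a : form k.+1) : prov k (iffF a a).
Proof. apply: der0; apply: iffI; apply: dA; apply: prov_id. Qed.
Lemma Neg_irr m (c : chain m) (h h' : c != set0) (p : form m) : Neg h p = Neg h' p.
Proof. by rewrite (eq_irrelevance h h'). Qed.

Lemma negc_Neg m (c : chain m) (h : c != set0) (p : form m) : negc c p = Neg h p.
Proof.
rewrite /negc.
suff H : forall (b : bool) (e : (c != set0) = b),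
  (if b as b' return ((c != set0) = b' -> form m) then (Neg (c:=c))^~ p else fun=> p) e = Neg h p.
  exact: H.
case=> e /=; first by rewrite (eq_irrelevance e h).
by rewrite h in e.
Qed.
Lemma negc0 m (p : form m) : negc set0 p = p.
Proof.
rewrite /negc.
suff H : forall (b : bool) (e : (set0 != set0 :> chain m) = b),
  (if b as b' return ((set0 != set0 :> chain m) = b' -> form m) then (Neg (c:=set0))^~ p else fun=> p) e = p.
  exact: H.
by case=> e //=; exfalso; move: e; rewrite eqxx.
Qed.

Lemma cocat0c m (d : chain m) : cocat set0 d = d.
Proof. by apply/setP=> i; rewrite !inE; case: (i \in d). Qed.
Lemma cocatc0 m (d : chain m) : cocat d set0 = d.
Proof. by apply/setP=> i; rewrite !inE; case: (i \in d). Qed.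
Lemma cocatTT m : cocat [set: 'I_m] setT = set0.
Proof. by apply/setP=> i; rewrite !inE. Qed.
Lemma cocatTTc m (d : chain m) : cocat setT (cocat setT d) = d.
Proof. by apply/setP=> i; rewrite !inE; case: (i \in d). Qed.

Definition resc n (c : chain n.+1) : chain n := [set i | widen_ord (leqnSn n) i \in c].

Lemma resc_lift n (c : chain n) : resc (liftc c) = c.
Proof.
apply/setP=> i; rewrite inE /liftc mem_imset //.
by move=> x y e; apply: val_inj; move: (congr1 val e).
Qed.
Lemma rescT n : resc [set: 'I_n.+1] = setT.
Proof. by apply/setP=> i; rewrite !inE. Qed.
Lemma resc_cocat n (a b : chain n.+1) : resc (cocat a b) = cocat (resc a) (resc b).
Proof. by apply/setP=> i; rewrite !inE. Qed.
Lemma resc_sub n (a b : chain n.+1) : a \subset b -> resc a \subset resc b.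
Proof. by move=> H; apply/subsetP=> i; rewrite !inE; apply: (subsetP H). Qed.

Fixpoint tr m (phi : form m.+1) : form m :=
  match phi with
  | Var p => Var p
  | Bot c => Bot (resc c)
  | Neg c _ psi => negc (resc c) (tr psi)
  | Imp a b => Imp (tr a) (tr b)
  end.

Lemma resc0 n : resc (set0 : chain n.+1) = set0.
Proof. by apply/setP=> i; rewrite !inE. Qed.

Lemma tr_negc m (c : chain m.+1) (p : form m.+1) : tr (negc c p) = negc (resc c) (tr p).
Proof.
have [->|h] := eqVneq c set0; first by rewrite resc0 !negc0.
by rewrite (negc_Neg h).
Qed.

Lemma tr_negF m (p : form m.+2) : tr (negF p) = negF (tr p).
Proof. by rewrite /= rescT (negc_Neg (setT_neq0 m)). Qed.
Lemma tr_iffF m (a b : form m.+2) : tr (iffF a b) = iffF (tr a) (tr b).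
Proof.
have tI : forall x y : form m.+2, tr (Imp x y) = Imp (tr x) (tr y) by [].
by rewrite /iffF /andF !(tr_negF, tI).
Qed.

Lemma tr_embed n (phi : form n) : tr (embed phi) = phi.
Proof.
elim: phi => [p|c|c h p IH|a IHa b IHb] //=; rewrite ?resc_lift //.
- by rewrite IH (negc_Neg h).
- by rewrite IHa IHb.
Qed.

Lemma top k : prov k (Bot set0).
Proof.
apply: der0.
have h6 := A6 (setT_neq0 k) (setT_neq0 k); rewrite cocatTT in h6.
apply: dM (iffE1 (dA _ h6)) _.
apply: selfneg; apply: DT.
exact: dM (dM (dA _ (A4 (Bot setT) (setT_neq0 k))) (hyp _ _)) (hyp _ _).
Qed.

Lemma T4 k (c : chain k.+1) (h : c != set0) : prov k (iffF (Neg h (Bot set0)) (Bot c)).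
Proof.
apply: der0; apply: iffI; last first.
  exact: dM (dA _ (A4 _ h)) (dA _ (top k)).
apply: DT.
have [cT|cT] := eqVneq c setT.
  subst c; apply: efq _ (dA _ (top k)).
  by rewrite (Neg_irr h (setT_neq0 k)); apply: hyp.
have hc' : cocat setT c != set0.
  apply: contra_neq cT => e; by rewrite -(cocatTTc c) e cocatc0.
have h6 := A6 (setT_neq0 k) h.
have h4 := A4 (Bot set0) hc'.
have h5 := A5 (Bot set0) (setT_neq0 k) hc'.
rewrite cocatTTc (negc_Neg h) in h5.
have a1 : der (ext (Neg h (Bot set0)) (fun _ => False)) (negF (Neg hc' (Bot set0))).
  exact: dM (iffE2 (dA _ h5)) (hyp _ _).
have a2 : der (ext (Neg h (Bot set0)) (fun _ => False))
     (Imp (negF (Bot c)) (Neg hc' (Bot set0))).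
  apply: DT; apply: dM (dM (dA _ h4) (dA _ (top k))) _.
  exact: dM (iffE1 (dA _ h6)) (hyp _ _).
have h3 := A3 (Neg hc' (Bot set0)) (Bot c).
exact: dM (dM (dA _ h3) (dM (dA _ (A1 _ _)) a1)) a2.
Qed.

Lemma tr_prov n (psi : form n.+2) : prov n.+1 psi -> prov n (tr psi).
Proof.
have tI : forall x y : form n.+2, tr (Imp x y) = Imp (tr x) (tr y) by [].
elim=> {psi}.
- by move=> p q; exact: A1.
- by move=> p q r; exact: A2.
- by move=> p q; rewrite !(tI, tr_negF); exact: A3.
- move=> p ck hk /=.
  have [e|hr] := eqVneq (resc ck) set0.
    by rewrite e negc0; exact: A1.
  by rewrite (negc_Neg hr); exact: A4.
- move=> p ck cr hk hr; rewrite tr_iffF /= tr_negc resc_cocat.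
  have [ek|hk'] := eqVneq (resc ck) set0.
    by rewrite ek negc0 cocat0c; exact: iffR.
  have [er|hr'] := eqVneq (resc cr) set0.
    by rewrite er negc0 cocatc0; exact: iffR.
  rewrite (negc_Neg hk') (negc_Neg hr'); exact: A5.
- move=> ck cr hk hr; rewrite tr_iffF /= resc_cocat.
  have [ek|hk'] := eqVneq (resc ck) set0.
    by rewrite ek negc0 cocat0c; exact: iffR.
  have [er|hr'] := eqVneq (resc cr) set0.
    by rewrite er (negc_Neg hk') cocatc0; exact: T4.
  rewrite (negc_Neg hk'); exact: A6.
- move=> ck cr hk hr sub /=.
  have [er|hr'] := eqVneq (resc cr) set0.
    by rewrite er; exact: MP (A1 _ _) (top n).
  have hk' : resc ck != set0.
    apply: contra_neq hr' => e; apply/eqP; rewrite -subset0 -e.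
    exact: resc_sub.
  exact: A7 hk' hr' (resc_sub sub).
- by move=> p q _ H1 _ H2; exact: MP H1 H2.
Qed.

(* prov n = derivability in CPN_(n+1); the paper's n is n.+1 here (n >= 1). *)
Theorem mainTheorem16 (n : nat) (phi : form n.+1) :
  prov n.+1 (embed phi) -> prov n phi.
Proof. by move=> H; rewrite -(tr_embed phi); exact: tr_prov. Qed.
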